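(* Every topologically mixing sofic shift space over a finite alphabet has the $\bar d$-shadowing property.
   Context: A sofic shift is the set of label sequences of infinite paths in a finite edge-labelled directed graph; $\mathcal L(X)$ denotes the set of finite words appearing in $X$. $X$ is topologically mixing if for all $u,w\in\mathcal L(X)$ there is $N$ such that for all $n\ge N$ there is $v$ with $|v|=n$ and $uvw\in\mathcal L(X)$. $\bar d(x,y)=\limsup_{n\to\infty}\frac1n|\{0\le j<n:x_j\ne y_j\}|$. $X$ has the $\bar d$-shadowing property if for every $\varepsilon>0$ there is $N\in\mathbb N$ such that for every sequence $(w^{(j)})_{j\ge1}$ of words in $\mathcal L(X)$ with $|w^{(j)}|\ge N$ there is $x'\in X$ with $\bar d(w^{(1)}w^{(2)}\cdots,x')<\varepsilon$. *)

(* Defs.v *)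
From mathcomp Require Import all_boot all_order all_algebra.
From mathcomp Require Import all_classical all_reals all_analysis.
Set Implicit Arguments. Unset Strict Implicit. Unset Printing Implicit Defensive.
Import Order.TTheory GRing.Theory Num.Theory.
Local Open Scope classical_set_scope.
Local Open Scope ring_scope.

Record lgraph (A : Type) := LGraph {
  lg_V : finType;
  lg_E : finType;
  lg_src : lg_E -> lg_V;
  lg_tgt : lg_E -> lg_V;
  lg_lab : lg_E -> A }.

Definition is_inf_path A (G : lgraph A) (e : nat -> lg_E G) : Prop :=
  forall n, lg_tgt (e n) = lg_src (e n.+1).

Definition sofic_of A (G : lgraph A) : set (nat -> A) :=
  [set x | exists e : nat -> lg_E G, is_inf_path e /\ forall n, x n = lg_lab (e n)].

Definition is_sofic (A : finType) (X : set (nat -> A)) : Prop :=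
  exists G : lgraph A, X = sofic_of G.

Definition occurs_in (A : eqType) (w : seq A) (x : nat -> A) : Prop :=
  exists i, forall k, (k < size w)%N -> x (i + k)%N = nth (x i) w k.

Definition language (A : eqType) (X : set (nat -> A)) : set (seq A) :=
  [set w | exists2 x, X x & occurs_in w x].

Definition top_mixing (A : eqType) (X : set (nat -> A)) : Prop :=
  forall u w, language X u -> language X w ->
    exists N : nat, forall n, (N <= n)%N ->
      exists v : seq A, size v = n /\ language X (u ++ v ++ w).

Definition dbar (R : realType) (A : eqType) (x y : nat -> A) : R :=
  limn_sup (fun n : nat =>
    (#|[set j : 'I_n | x j != y j]|%:R / n%:R : R)).

Definition word_start (A : Type) (w : nat -> seq A) (j : nat) : nat :=
  (\sum_(i < j) size (w i))%N.

(* z is the infinite concatenation w 0 w 1 w 2 ... (determined uniquely when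
   all words are nonempty) *)
Definition is_concat (A : Type) (w : nat -> seq A) (z : nat -> A) : Prop :=
  forall j k, (k < size (w j))%N -> z (word_start w j + k)%N = nth (z 0%N) (w j) k.

Definition dbar_shadowing (R : realType) (A : finType) (X : set (nat -> A)) : Prop :=
  forall eps : R, 0 < eps ->
    exists N : nat, (0 < N)%N /\
      forall (w : nat -> seq A) (z : nat -> A),
        (forall j, language X (w j)) ->
        (forall j, (N <= size (w j))%N) ->
        is_concat w z ->
        exists2 x', X x' & dbar R z x' < eps.

(* Main.v *)
Require Import Defs.
From mathcomp Require Import all_boot all_order all_algebra.
From mathcomp Require Import all_classical all_reals all_analysis.
From mathcomp Require Import zify.
Set Implicit Arguments. Unset Strict Implicit. Unset Printing Implicit Defensive.
Import Order.TTheory GRing.Theory Num.Theory.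

Lemma fin_unif (T : finType) (P : T -> nat -> Prop) :
  (forall t n m, P t n -> (n <= m)%N -> P t m) ->
  (forall t, exists N, P t N) -> exists N, forall t, P t N.
Proof.
move=> mono H.
suff: forall s : seq T, exists N, forall t, t \in s -> P t N.
  by case/(_ (enum T)) => N HN; exists N => t; apply: HN; rewrite mem_enum.
elim=> [|a s [N HN]]; first by exists 0%N.
have [Na HNa] := H a.
exists (maxn N Na) => t; rewrite inE => /orP [/eqP ->|ts].
  by apply: mono HNa _; rewrite leq_maxr.
by apply: mono (HN t ts) _; rewrite leq_maxl.
Qed.

Fixpoint vseq (V E : Type) (tgt : E -> V) (st : nat -> V -> E) (v0 : V) (n : nat) : V :=
  match n with 0 => v0 | n'.+1 => tgt (st n' (vseq tgt st v0 n')) end.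

Section Graph.
Variables (A : finType) (G : lgraph A).
Local Notation V := (lg_V G).
Local Notation E := (lg_E G).
Local Notation src := (@lg_src A G).
Local Notation tgt := (@lg_tgt A G).
Local Notation lab := (@lg_lab A G).
Local Notation X := (sofic_of G).

Definition labw (e : nat -> E) (w : seq A) :=
  forall k, (k < size w)%N -> lab (e k) = nth (lab (e k)) w k.

Definition shift (e : nat -> E) n := fun i => e (n + i)%N.
Definition splice (a : nat -> E) n b := fun i => if (i < n)%N then a i else b (i - n)%N.

Lemma shift_path e n : is_inf_path e -> is_inf_path (shift e n).
Proof. by move=> pe i; rewrite /shift addnS. Qed.

Lemma splice_path a n b : is_inf_path a -> is_inf_path b ->
  src (a n) = src (b 0%N) -> is_inf_path (splice a n b).
Proof.
move=> pa pb e i; rewrite /splice /=.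
case: (ltnP i.+1 n) => h1.
  by rewrite (ltnW h1); apply: pa.
case: (ltnP i n) => h2.
  have Hn : i.+1 = n by apply/eqP; rewrite eqn_leq h1 h2.
  by rewrite -Hn subnn -e -Hn; apply: pa.
by rewrite subSn // pb.
Qed.

Lemma splice_lab a b u r : labw a u -> labw b r -> labw (splice a (size u) b) (u ++ r).
Proof.
move=> la lb k; rewrite seq.size_cat => hk; rewrite /splice seq.nth_cat.
case: ltnP => h; first exact: la.
apply: lb; lia.
Qed.

Lemma labw_cat e u r : labw e (u ++ r) -> labw e u /\ labw (shift e (size u)) r.
Proof.
move=> h; split => k hk.
  have := h k; rewrite seq.size_cat seq.nth_cat hk; apply; lia.
have := h (size u + k)%N; rewrite seq.size_cat seq.nth_cat.
have -> : (size u + k < size u)%N = false by apply/negbTE; rewrite -leqNgt leq_addr.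
rewrite addKn /shift.
apply; lia.
Qed.

Lemma labw_take e w n : labw e w -> labw e (take n w).
Proof.
by rewrite -{1}(cat_take_drop n w) => /labw_cat [].
Qed.

Lemma lang_path w : language X w <-> exists e, is_inf_path e /\ labw e w.
Proof.
split.
  move=> [x [e [pe xe]] [i Hi]]; exists (shift e i); split; first exact: shift_path.
  move=> k hk; rewrite /shift -xe Hi //; exact: set_nth_default.
move=> [e [pe le]]; exists (fun n => lab (e n)); first by exists e.
exists 0%N => k hk; rewrite add0n le //; exact: set_nth_default.
Qed.

Definition Kend (u : seq A) : {set V} :=
  [set s | `[< exists e, is_inf_path e /\ labw e u /\ src (e (size u)) = s >] ].
Definition Kst (w : seq A) : {set V} :=
  [set t | `[< exists e, is_inf_path e /\ labw e w /\ src (e 0%N) = t >] ].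
Definition Conn (S T : {set V}) n :=
  exists f, is_inf_path f /\ src (f 0%N) \in S /\ src (f n) \in T.

Lemma conn_of u v w : language X (u ++ v ++ w) -> Conn (Kend u) (Kst w) (size v).
Proof.
move/lang_path => [e [pe le]].
case/labw_cat: le => lu lvw.
case/labw_cat: lvw => lv lw.
exists (shift e (size u)); split; first exact: shift_path.
split; rewrite inE; apply/asboolP.
  by exists e; split => //; split => //; rewrite /shift addn0.
exists (shift (shift e (size u)) (size v)); split; first by do 2 apply: shift_path.
by split => //; rewrite /shift addn0.
Qed.

Lemma of_conn u w n : Conn (Kend u) (Kst w) n ->
  exists v, size v = n /\ language X (u ++ v ++ w).
Proof.
move=> [f [pf [h1 h3]]].
move: h1; rewrite inE => /asboolP [e1 [p1 [l1 s1]]].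
move: h3; rewrite inE => /asboolP [e3 [p3 [l3 s3]]].
exists (mkseq (fun i => lab (f i)) n); split; first by rewrite size_mkseq.
apply/lang_path; exists (splice e1 (size u) (splice f n e3)); split.
  apply: splice_path => //; first by apply: splice_path => //; rewrite s3.
  rewrite s1 /splice; case: n s3 {l3} => [|n] s3 //=.
apply: splice_lab => //.
have {1}-> : n = size (mkseq (fun i => lab (f i)) n) by rewrite size_mkseq.
apply: splice_lab => // k; rewrite size_mkseq => hk; by rewrite nth_mkseq.
Qed.

Lemma unif_mix : top_mixing X -> exists M, forall u w, language X u -> language X w ->
  exists v, size v = M /\ language X (u ++ v ++ w).
Proof.
move=> mix.
pose P (q : {set V} * {set V}) n := forall m, (n <= m)%N ->
  (exists u w, language X u /\ language X w /\ Kend u = q.1 /\ Kst w = q.2) ->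
  Conn q.1 q.2 m.
have [M HM] : exists M, forall q, P q M.
  apply: fin_unif => [q n m Pn nm k mk|q]; first by apply: Pn; exact: leq_trans nm mk.
  case: (EM (exists u w, language X u /\ language X w /\ Kend u = q.1 /\ Kst w = q.2))
    => [[u [w [Lu [Lw [e1 e2]]]]]|nq].
    have [N HN] := mix u w Lu Lw; exists N => m Nm _.
    have [v [sv Lv]] := HN m Nm; rewrite -e1 -e2 -sv; exact: conn_of.
  by exists 0%N => m _ h; exfalso; exact: nq h.
exists M => u w Lu Lw; apply: of_conn; apply: (HM (Kend u, Kst w)) => //.
by exists u, w.
Qed.

Lemma konig (x : nat -> A) : (forall n, language X (mkseq x n)) -> X x.
Proof.
move=> hx.
pose D n v m := exists e, is_inf_path e /\ src (e 0%N) = v /\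
  forall k, (k < m)%N -> lab (e k) = x (n + k)%N.
have Dmono n v m m' : D n v m -> (m' <= m)%N -> D n v m'.
  move=> [e [pe [se le]]] h; exists e; split => //; split => //.
  move=> k km; apply: le; exact: leq_trans km h.
have [v0 hv0] : exists v, forall m, D 0%N v m.
  apply/not_existsP => hn.
  have [M HM] : exists M, forall v, ~ D 0%N v M.
    apply: fin_unif => [v n m hn' nm hm|v]; first exact: hn' (Dmono _ _ _ _ hm nm).
    have [m hm] : exists m, ~ D 0%N v m by apply/existsNP; exact: hn v.
    by exists m.
  have [e [pe le]] := (lang_path _).1 (hx M).
  apply: (HM (src (e 0%N))); exists e; split => //; split => // k hk.
  have := le k; rewrite size_mkseq => /(_ hk) ->; by rewrite nth_mkseq.
have Dstep n v : (forall m, D n v m) ->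
    exists ed, src ed = v /\ lab ed = x n /\ forall m, D n.+1 (tgt ed) m.
  move=> hv; apply/not_existsP => hn.
  have [M HM] : exists M, forall ed, src ed = v -> lab ed = x n -> ~ D n.+1 (tgt ed) M.
    apply: fin_unif => [ed a b h ab sv lv hd|ed].
      exact: (h sv lv (Dmono _ _ _ _ hd ab)).
    case: (EM (src ed = v /\ lab ed = x n)) => [[sv lv]|ns].
      have [m hm] : exists m, ~ D n.+1 (tgt ed) m.
        by apply/existsNP => hh; apply: (hn ed); split => //; split => //.
      by exists m.
    by exists 0%N => sv lv; exfalso; apply: ns.
  have [e [pe [se le]]] := hv M.+1.
  apply: (HM (e 0%N)) => //; first by rewrite le // addn0.
  exists (shift e 1); split; first exact: shift_path.
  split; first by rewrite /shift (pe 0%N).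
  move=> k hk; rewrite /shift le; [congr x; lia|lia].
have [e0 _] := (lang_path _).1 (hx 0%N).
have [step Hstep] : {step : nat * V -> E & forall p, (forall m, D p.1 p.2 m) ->
  src (step p) = p.2 /\ lab (step p) = x p.1 /\ forall m, D p.1.+1 (tgt (step p)) m}.
  apply: (@choice _ _ (fun (p : nat * V) ed => (forall m, D p.1 p.2 m) ->
    src ed = p.2 /\ lab ed = x p.1 /\ forall m, D p.1.+1 (tgt ed) m)).
  move=> [n v] /=; case: (EM (forall m, D n v m)) => [h|h].
    by have [ed Hed] := Dstep n v h; exists ed.
  by exists (e0 0%N).
pose vs := vseq tgt (fun n v => step (n, v)) v0.
have inv : forall n m, D n (vs n) m.
  elim => [|n IH] /=; first exact: hv0.
  by have [_ [_ h]] := Hstep (n, vs n) IH.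
exists (fun n => step (n, vs n)); split.
  by move=> n; have [-> _] := Hstep (n.+1, vs n.+1) (inv n.+1).
by move=> n; have [_ [-> _]] := Hstep (n, vs n) (inv n).
Qed.

End Graph.

Fixpoint Wseq (A : Type) (g : seq A -> seq A -> seq A) (u : nat -> seq A) (n : nat) : seq A :=
  match n with 0 => u 0%N | n'.+1 => Wseq g u n' ++ g (Wseq g u n') (u n) ++ u n end.

Lemma win_sum n s M : (\sum_(j < n) ((j < s) && (s <= j + M) : nat) <= M)%N.
Proof.
rewrite -(big_mkord xpredT (fun j => ((j < s) && (s <= j + M) : nat))).
suff : (\sum_(0 <= j < n) ((j < s) && (s <= j + M) : nat) <= minn M (n - (s - M)))%N.
  by move=> h; apply: leq_trans h (geq_minl _ _).
elim: n => [|n IH]; first by rewrite big_geq.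
rewrite big_nat_recr //=.
case h: ((n < s) && (s <= n + M))%N => /=.
  move/andP: h => [h1 h2]; lia.
rewrite addn0; apply: leq_trans IH _; lia.
Qed.

Lemma word_startS (A : Type) (w : nat -> seq A) j :
  word_start w j.+1 = (word_start w j + size (w j))%N.
Proof. by rewrite /word_start big_ord_recr. Qed.

Lemma word_start0 (A : Type) (w : nat -> seq A) : word_start w 0 = 0%N.
Proof. by rewrite /word_start big_ord0. Qed.

Lemma card_cls (T : finType) (P : T -> bool) :
  #|[set j : T | P j]%classic| = #|[set j : T | P j]|.
Proof. apply: eq_card => j; rewrite !inE /=. by apply/idP/idP; rewrite in_setE. Qed.

Local Open Scope ring_scope.
Unset Implicit Arguments.

Theorem mainTheorem4 (R : realType) (A : finType) (X : set (nat -> A)) :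
  is_sofic X -> top_mixing X -> dbar_shadowing R X.
Proof.
move=> [G ->] mix eps eps0.
have [M HM] := unif_mix mix.
have [k hk] : exists k : nat, 2 / eps < k%:R by eexists; exact: truncnS_gt.
have k0 : (0 < k)%N.
  rewrite lt0n; apply/negP => /eqP k0; move: hk; rewrite k0 => /lt_le_trans/(_ (lexx _)).
  by rewrite ltNge divr_ge0 // ltW.
exists (M.+1 * k)%N; split; first by rewrite muln_gt0.
set N := (M.+1 * k)%N.
have NM : (M.+1 <= N)%N by rewrite /N leq_pmulr.
move=> w z Lw Nw cz.
have [g Hg] : {g : seq A * seq A -> seq A & forall p, language (sofic_of G) p.1 ->
    language (sofic_of G) p.2 ->
    size (g p) = M /\ language (sofic_of G) (p.1 ++ g p ++ p.2)}.
  apply: (@choice _ _ (fun (p : seq A * seq A) v => language (sofic_of G) p.1 ->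
    language (sofic_of G) p.2 ->
    size v = M /\ language (sofic_of G) (p.1 ++ v ++ p.2))).
  move=> [a b] /=; case: (EM (language (sofic_of G) a /\ language (sofic_of G) b)).
    by move=> [La Lb]; have [v Hv] := HM a b La Lb; exists v.
  by move=> h; exists [::] => La Lb; exfalso; apply: h.
pose u j := take (size (w j) - M) (w j).
have Lu j : language (sofic_of G) (u j).
  have [e [pe le]] := (lang_path _ _).1 (Lw j).
  by apply/lang_path; exists e; split => //; apply: labw_take.
have su j : size (u j) = (size (w j) - M)%N.
  by rewrite size_takel // leq_subr.
pose W := Wseq (fun a b => g (a, b)) u.
have WS j : W j.+1 = W j ++ g (W j, u j.+1) ++ u j.+1 by [].
have W0 : W 0%N = u 0%N by [].
have LW j : language (sofic_of G) (W j).
  elim: j => [|j IH]; first exact: Lu.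
  exact: (Hg (W j, u j.+1) IH (Lu j.+1)).2.
have sW j : (size (W j) + M = word_start w j.+1)%N.
  elim: j => [|j IH].
    rewrite W0 word_startS word_start0 su; have := Nw 0%N; lia.
  rewrite WS !seq.size_cat (Hg (W j, u j.+1) (LW j) (Lu j.+1)).1 su word_startS -IH.
  have := Nw j.+1; lia.
have pre j l : (j <= l)%N -> exists r, W l = W j ++ r.
  move=> /subnK <-; elim: (l - j)%N => [|d [r IH]]; first by exists [::]; rewrite add0n cats0.
  by exists (r ++ g (W (d + j)%N, u (d + j).+1) ++ u (d + j).+1); rewrite addSn WS IH -!catA.
have nthW a b p : (p < size (W a))%N -> (p < size (W b))%N ->
    nth (z 0%N) (W a) p = nth (z 0%N) (W b) p.
  case: (leqP a b) => [ab|/ltnW ba] ha hb.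
    by have [r ->] := pre a b ab; rewrite seq.nth_cat ha.
  by have [r ->] := pre b a ba; rewrite seq.nth_cat hb.
have stN j : (j * N <= word_start w j)%N.
  elim: j => [|j IH]; first by rewrite word_start0.
  rewrite word_startS mulSn addnC; apply: leq_add => //.
have sWj j : (j < size (W j))%N.
  have := sW j; have := stN j.+1; have := NM; nia.
pose x' p := nth (z 0%N) (W p) p.
have Xx' : sofic_of G x'.
  apply: konig => n.
  have -> : mkseq x' n = take n (W n).
    apply: (@eq_from_nth _ (z 0%N)).
      by rewrite size_mkseq size_takel //; apply: ltnW.
    move=> i; rewrite size_mkseq => hi; rewrite nth_mkseq // nth_take // /x'.
    apply: nthW; [exact: sWj|]; apply: leq_trans (sWj n); lia.
  have [e [pe le]] := (lang_path _ _).1 (LW n).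
  by apply/lang_path; exists e; split => //; apply: labw_take.
have agree i q0 : (q0 < size (w i) - M)%N ->
    x' (word_start w i + q0)%N = z (word_start w i + q0)%N.
  move=> hq0.
  have hWi : (word_start w i + q0 < size (W i))%N.
    by have := sW i; rewrite word_startS; lia.
  rewrite /x' (nthW _ i _ (sWj _) hWi).
  have -> : nth (z 0%N) (W i) (word_start w i + q0) = nth (z 0%N) (u i) q0.
    case: i hq0 hWi => [|i] hq0 hWi; first by rewrite W0 word_start0 add0n.
    rewrite WS catA seq.nth_cat seq.size_cat (Hg (W i, u i.+1) (LW i) (Lu i.+1)).1 sW.
    by rewrite ltnNge leq_addr /= addKn.
  rewrite /u nth_take // (cz i q0) //; lia.
have bad p : x' p != z p ->
    exists i, (p < word_start w i.+1)%N && (word_start w i.+1 <= p + M)%N.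
  have H j : forall q, (q < word_start w j)%N -> x' q = z q \/
      exists i, (q < word_start w i.+1)%N && (word_start w i.+1 <= q + M)%N.
    elim: j => [|j IH] q; first by rewrite word_start0.
    move=> hq; case: (ltnP q (word_start w j)) => hq'; first exact: IH.
    case: (ltnP (q - word_start w j) (size (w j) - M)) => hk'.
      by left; have := agree j _ hk'; rewrite subnKC.
    by right; exists j; apply/andP; split => //; move: hq; rewrite word_startS; lia.
  move=> hn; case: (H p.+1 p _) => //.
    by apply: leq_trans (stN p.+1); have := NM; nia.
  by move=> e; rewrite e eqxx in hn.
have cnt n : (#|[set j : 'I_n | z j != x' j]| <= M * ((n + M) %/ N))%N.
  rewrite -sum1_card big_mkcond /=.
  apply: (@leq_trans (\sum_(j < n) \sum_(i < (n + M) %/ N)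
     ((j < word_start w i.+1) && (word_start w i.+1 <= j + M) : nat))%N).
    apply: leq_sum => j _; rewrite inE; case: ifP => // h.
    have [i /andP [h1 h2]] := bad j ltac:(by rewrite eq_sym h).
    have iK : (i < (n + M) %/ N)%N.
      rewrite leq_divRL; last by apply: leq_trans NM.
      have := stN i.+1; have := ltn_ord j; lia.
    by rewrite (bigD1 (Ordinal iK)) //= h1 h2.
  rewrite exchange_big /=.
  apply: (@leq_trans (\sum_(j < (n + M) %/ N) M)%N).
    by apply: leq_sum => i _; apply: win_sum.
  by rewrite sum_nat_const card_ord mulnC.
pose a := fun n : nat => (#|[set j : 'I_n | z j != x' j]%classic|%:R / n%:R : R).
exists x' => //.
have a_bd n : (M < n)%N -> a n <= 2 / k%:R.
  move=> hn; rewrite /a card_cls ler_pdivrMr ?ltr0n; last lia.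
  rewrite mulrAC ler_pdivlMr ?ltr0n //.
  have h : (#|[set j : 'I_n | z j != x' j]| * k <= 2 * n)%N.
    have h1 := leq_mul (cnt n) (leqnn k).
    have h2 := leq_divM (n + M) N.
    have h3 : (M * ((n + M) %/ N) * k <= (n + M) %/ N * N)%N.
      rewrite mulnAC mulnC; apply: leq_mul => //; rewrite /N; apply: leq_mul => //.
    lia.
  by move: h; rewrite -(ler_nat R) !natrM.
have ba : bounded_fun a.
  exists 1; split; first exact: num_real.
  move=> M1 hM1 n _; apply: le_trans _ (ltW hM1); rewrite /a card_cls.
  rewrite ger0_norm ?divr_ge0 //.
  case: n => [|n]; first by rewrite /a invr0 mulr0.
  rewrite /a ler_pdivrMr ?ltr0n // mul1r ler_nat.
  by apply: leq_trans (max_card _) _; rewrite card_ord.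
change (limn_sup a < eps).
rewrite limn_supE //.
apply: (@le_lt_trans _ _ (2 / k%:R)).
  have hr : range (sups a) (sups a M.+1) by exists M.+1.
  apply: le_trans (ge_inf (bounded_fun_has_lbound_sups ba) hr) _.
  rewrite /sups /=; apply: ge_sup; first by exists (a M.+1); exists M.+1 => /=.
  by move=> _ [m hm <-]; apply: a_bd; exact: hm.
by rewrite ltr_pdivrMr ?ltr0n // mulrC -ltr_pdivrMr.
Qed.
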